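(* Let $k$ be a field and $\mathsf{E}$ a left strictly locally finite $k$-linear category. Then the class of cofinite right $\mathsf{E}$-modules is closed under extensions in the category of right $\mathsf{E}$-modules: if $0\to L\to M\to N\to0$ is a short exact sequence of right $\mathsf{E}$-modules with $L$ and $N$ cofinite, then $M$ is cofinite.
   Context: A small $k$-linear category $\mathsf{E}$ has $k$-vector spaces $\operatorname{Hom}_\mathsf{E}(x,y)$, $k$-bilinear associative composition and identities with $\mathrm{id}_x\ne0$. A right $\mathsf{E}$-module is a $k$-linear functor $N:\mathsf{E}^{op}\to k\text{-Vect}$ (action maps $\operatorname{Hom}_\mathsf{E}(x,y)\otimes_kN(y)\to N(x)$). Write $x\preceq y$ if there are $n\ge1$ and objects $x=z_0,\dots,z_n=y$ with $\operatorname{Hom}_\mathsf{E}(z_{i-1},z_i)\neq0$ for all $i$; $x\prec y$ means $x\preceq y$ and not $y\preceq x$. $\mathsf{E}$ is locally finite if all Hom spaces are finite-dimensional and every $\{z:x\preceq z\preceq y\}$ is finite; left strictly locally finite if moreover for every $y$ there is a finite set $X_y$ of objects with $x\prec y$ for $x\in X_y$ such that every $f:z\to y$ with $z\prec y$ equals $\sum_{i=1}^nh_ig_i$ ($n\ge0$) with $g_i:z\to x_i$, $h_i:x_i\to y$, $x_i\in X_y$. A right $\mathsf{E}$-module $N$ is cofinite if for every object $y$ there is a finite set of objects $A$ such that the action map $\operatorname{Hom}_\mathsf{E}(x,y)\otimes_kN(y)\to N(x)$ vanishes for all $x\notin A$. *)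

(* Defs.v *)
From HB Require Import structures.
From mathcomp Require Import all_boot all_algebra.
From Stdlib Require Import Relations.
From Stdlib Require List.
Set Implicit Arguments. Unset Strict Implicit. Unset Printing Implicit Defensive.
Import GRing.Theory.
Local Open Scope ring_scope.

Record kcat (k : fieldType) := KCat {
  Obj : Type;
  Hom : Obj -> Obj -> lmodType k;
  comp : forall x y z, Hom y z -> Hom x y -> Hom x z;
  idm : forall x, Hom x x;
  comp_linl : forall x y z (a : k) (g g' : Hom y z) (f : Hom x y),
      comp (a *: g + g') f = a *: comp g f + comp g' f;
  comp_linr : forall x y z (a : k) (g : Hom y z) (f f' : Hom x y),
      comp g (a *: f + f') = a *: comp g f + comp g f';
  compA : forall w x y z (h : Hom y z) (g : Hom x y) (f : Hom w x),
      comp h (comp g f) = comp (comp h g) f;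
  comp1f : forall x y (f : Hom x y), comp (idm y) f = f;
  compf1 : forall x y (f : Hom x y), comp f (idm x) = f;
  idm_neq0 : forall x, idm x != 0
}.

Arguments Hom {k} _ _ _.
Arguments comp {k} _ {x y z}.
Arguments idm {k} _ x.

Definition fin_dim (k : fieldType) (V : lmodType k) : Prop :=
  exists s : seq V, forall v : V,
    exists c : 'I_(size s) -> k, v = \sum_(i < size s) c i *: s`_i.

Section Cat.
Variables (k : fieldType) (E : kcat k).

Definition hom_nz (x y : Obj E) : Prop := exists f : Hom E x y, f != 0.

Definition preceq : relation (Obj E) := clos_trans _ hom_nz.

Definition prec (x y : Obj E) : Prop := preceq x y /\ ~ preceq y x.

Definition locally_finite : Prop :=
  (forall x y : Obj E, fin_dim (Hom E x y)) /\
  (forall x y : Obj E, exists l : list (Obj E),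
      forall z, preceq x z -> preceq z y -> List.In z l).

Definition left_strictly_locally_finite : Prop :=
  locally_finite /\
  forall y : Obj E, exists X : list (Obj E),
    (forall x, List.In x X -> prec x y) /\
    forall (z : Obj E) (f : Hom E z y), prec z y ->
      exists (n : nat) (xs : 'I_n -> Obj E)
             (g : forall i, Hom E z (xs i)) (h : forall i, Hom E (xs i) y),
        (forall i, List.In (xs i) X) /\
        f = \sum_(i < n) comp E (h i) (g i).

(* right E-modules: k-linear functors E^op -> k-Vect *)
Record rmod := RMod {
  mobj : Obj E -> lmodType k;
  act : forall x y, Hom E x y -> mobj y -> mobj x;
  act_linl : forall x y (a : k) (f f' : Hom E x y) (n : mobj y),
      act (a *: f + f') n = a *: act f n + act f' n;
  act_linr : forall x y (a : k) (f : Hom E x y) (n n' : mobj y),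
      act f (a *: n + n') = a *: act f n + act f n';
  act_comp : forall x y z (g : Hom E y z) (f : Hom E x y) (n : mobj z),
      act (comp E g f) n = act f (act g n);
  act_id : forall x (n : mobj x), act (idm E x) n = n
}.

Arguments act _ {x y}.

Record rmorph (M N : rmod) : Type := RMorph {
  mfun : forall x, mobj M x -> mobj N x;
  mfun_lin : forall x (a : k) (m m' : mobj M x),
      @mfun x (a *: m + m') = a *: @mfun x m + @mfun x m';
  mfun_nat : forall x y (f : Hom E x y) (m : mobj M y),
      @mfun x (act M f m) = act N f (@mfun y m)
}.

Arguments mfun {M N} _ x.

Definition short_exact (L M N : rmod) (i : rmorph L M) (p : rmorph M N) : Prop :=
  forall x : Obj E,
    injective (mfun i x) /\
    (forall n : mobj N x, exists m, mfun p x m = n) /\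
    (forall m : mobj M x, mfun p x m = 0 <-> exists l, mfun i x l = m).

Definition cofinite (N : rmod) : Prop :=
  forall y : Obj E, exists A : list (Obj E),
    forall x : Obj E, ~ List.In x A ->
      forall (f : Hom E x y) (n : mobj N y), act N f n = 0.

End Cat.

(* Main.v *)
Require Import Defs.
From mathcomp Require Import all_boot all_algebra.
From Stdlib Require Import Relations ClassicalEpsilon.
From Stdlib Require List.
Set Implicit Arguments. Unset Strict Implicit. Unset Printing Implicit Defensive.
Import GRing.Theory.
Local Open Scope ring_scope.

Definition pb (P : Prop) : bool := if excluded_middle_informative P then true else false.

Lemma pbP (P : Prop) : pb P = true <-> P.
Proof. rewrite /pb; case: excluded_middle_informative => //; split => //. Qed.

Lemma count_lt_strict (T : Type) (a b : pred T) (s : seq T) :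
  (forall z, a z -> b z) -> (exists z, List.In z s /\ b z /\ ~~ a z) ->
  (count a s < count b s)%N.
Proof.
move=> ab; elim: s => [|x s IH] [z [Hin [bz naz]]] /=; first by case: Hin.
have le : forall s0 : seq T, (count a s0 <= count b s0)%N.
  elim=> //= w s0 IH0; case aw: (a w); first by rewrite (ab _ aw) /= ltnS.
  by rewrite add0n; apply: leq_trans IH0 (leq_addl _ _).
case: Hin => [Exz|Hin]; first subst z.
  by rewrite (negbTE naz) bz add0n add1n ltnS le.
have := IH (ex_intro _ z (conj Hin (conj bz naz))).
case ax: (a x); first by rewrite (ab _ ax) /= ltnS.
by rewrite add0n => H; apply: leq_trans H (leq_addl _ _).
Qed.

Lemma gather (T T' : Type) (Q : T -> list T' -> Prop) :
  (forall z, exists A, Q z A) -> forall l : list T, exists B : list T',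
  forall z, List.In z l -> exists A, Q z A /\ (forall w, List.In w A -> List.In w B).
Proof.
move=> HQ; elim=> [|a l [B HB]]; first by exists nil.
have [A HA] := HQ a.
exists (A ++ B)%list => z [<-|Hz].
  by exists A; split=> // w Hw; apply: List.in_or_app; left.
have [A' [HA' Hi]] := HB z Hz.
by exists A'; split=> // w Hw; apply: List.in_or_app; right; apply: Hi.
Qed.

Section Aux.
Variables (k : fieldType) (E : kcat k).

Lemma act0f (M : rmod E) x y (n : mobj M y) : act (r:=M) (0 : Defs.Hom E x y) n = 0.
Proof.
have := act_linl (r:=M) (x:=x) (-1) 0 0 n.
by rewrite !scaleN1r ?oppr0 ?addr0 ?addNr.
Qed.

Lemma actf0 (M : rmod E) x y (f : Defs.Hom E x y) : act (r:=M) f 0 = 0.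
Proof.
have := act_linr (r:=M) (-1) f (0 : mobj M y) 0.
by rewrite scaleN1r oppr0 addr0 scaleN1r addNr.
Qed.

Lemma actD (M : rmod E) x y (f f' : Defs.Hom E x y) n :
  act (r:=M) (f + f') n = act (r:=M) f n + act (r:=M) f' n.
Proof. by have := act_linl (r:=M) 1 f f' n; rewrite !scale1r. Qed.

Lemma act_sum (M : rmod E) x y n (F : 'I_n -> Defs.Hom E x y) m :
  act (r:=M) (\sum_(i < n) F i) m = \sum_(i < n) act (r:=M) (F i) m.
Proof.
apply: (big_morph (fun f => act (r:=M) f m)).
  by move=> f f'; apply: actD.
by apply: act0f.
Qed.

Lemma mfun0 (M N : rmod E) (i : rmorph M N) x : mfun i (x:=x) 0 = 0.
Proof.
have := mfun_lin i (x:=x) (-1) 0 0.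
by rewrite scaleN1r oppr0 addr0 scaleN1r addNr.
Qed.

End Aux.

Theorem lemma6p3 (k : fieldType) (E : kcat k)
  (HE : left_strictly_locally_finite E)
  (L M N : rmod E) (i : rmorph L M) (p : rmorph M N) :
  short_exact i p -> cofinite L -> cofinite N -> cofinite M.
Proof.
move=> Hex HL HN y.
case: HE => [[_ Hint] HX].
have [AN HAN] := HN y.
pose P := (y :: AN)%list.
have [XB HXB] := gather (HX) P.
have [IB HIB] := gather (fun t => Hint t t) P.
have [LB HLB] := gather HL XB.
exists (P ++ IB ++ LB)%list => x HxB.
have xIB : ~ List.In x IB by move=> H; apply: HxB; apply: List.in_or_app; right;
  apply: List.in_or_app; left.
have xLB : ~ List.In x LB by move=> H; apply: HxB; apply: List.in_or_app; right;
  apply: List.in_or_app; right.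
pose mu t := count (fun v => pb (preceq v t)) P.
have refl : forall t : Obj E, preceq t t.
  by move=> t; apply: t_step; exists (Defs.idm E t); apply: idm_neq0.
suff claim : forall n t, (mu t < n)%N -> List.In t P ->
    forall (h : Defs.Hom E t y) (g : Defs.Hom E x t) (m : mobj M y), act (r:=M) g (act (r:=M) h m) = 0.
  move=> f m; have := claim (mu y).+1 y (ltnSn _) (or_introl erefl) (Defs.idm E y) f m.
  by rewrite act_id.
elim=> [//|n IH] t Hmu HtP h g m.
case: (eqVneq g 0) => [->|gnz]; first by apply: act0f.
have xt : preceq x t by rewrite /preceq; apply: t_step; exists g.
case: (classic (preceq t x)) => [tx|ntx].
  exfalso; apply: xIB.
  have [I [HI HIi]] := HIB t HtP.
  by apply: HIi; apply: HI.
have [X [[HX1 HX2] HXi]] := HXB t HtP.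
have [n' [xs [gs [hs [Hin ->]]]]] := HX2 x g (conj xt ntx).
rewrite act_sum; apply: big1 => j _.
rewrite act_comp -(act_comp h (hs j)).
case: (classic (List.In (xs j) P)) => [zP|nzP].
  apply: (IH (xs j)) => //.
  have [zt nzt] := HX1 _ (Hin j).
  rewrite ltnS in Hmu; apply: (leq_trans _ Hmu).
  apply: count_lt_strict.
    move=> v /pbP Hv; apply/pbP; rewrite /preceq; apply: t_trans Hv zt.
  exists t; split=> //; split; first by apply/pbP.
  by apply/negP => /pbP.
have zAN : ~ List.In (xs j) AN by move=> H; apply: nzP; right.
have Hp := HAN (xs j) zAN (Defs.comp E h (hs j)) (mfun p m).
rewrite -mfun_nat in Hp.
have [_ [_ Hker]] := Hex (xs j).
have [l Hl] := (proj1 (Hker _)) Hp.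
rewrite -Hl -mfun_nat.
have [A [HA HAi]] := HLB (xs j) (HXi _ (Hin j)).
rewrite HA ?mfun0 //.
by move=> H; apply: xLB; apply: HAi.
Qed.
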